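(* The class of coherent spaces is not $\omega$-projective: there is a projective system of coherent topological spaces, indexed by a directed preordered set with a countable cofinal subset, whose projective limit in the category of topological spaces is not coherent.
   Context: A projective system of topological spaces consists of a directed preordered set $(I,\sqsubseteq)$, spaces $X_i$ and continuous maps $p_{ij}\colon X_j\to X_i$ for $i\sqsubseteq j$ with $p_{ii}=\mathrm{id}$ and $p_{ij}\circ p_{jk}=p_{ik}$; its projective limit is its limit in the category of topological spaces. A space is coherent if the intersection of any two compact saturated subsets is compact (saturated = upward closed in the specialization preorder $x\le y$ iff every open neighbourhood of $x$ contains $y$; compactness assumes no separation axiom). *)

(* Defs.v *)
From HB Require Import structures.
From mathcomp Require Import all_boot all_order.
From mathcomp Require Import boolp classical_sets functions cardinality topology.
Set Implicit Arguments. Unset Strict Implicit. Unset Printing Implicit Defensive.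
Local Open Scope classical_set_scope.

Definition spec_le {T : topologicalType} (x y : T) : Prop :=
  forall U : set T, open U -> U x -> U y.

Definition saturated {T : topologicalType} (A : set T) : Prop :=
  forall x y, A x -> spec_le x y -> A y.

(* Coherent: the intersection of two compact saturated sets is compact
   (compactness as in MathComp-Analysis: no separation axiom). *)
Definition coherent (T : topologicalType) : Prop :=
  forall A B : set T, compact A -> saturated A -> compact B -> saturated B ->
    compact (A `&` B).

Definition directed_preorder (I : Type) (le : I -> I -> Prop) : Prop :=
  (forall i, le i i) /\ (forall i j k, le i j -> le j k -> le i k) /\
  (exists i : I, True) /\ (forall i j, exists k, le i k /\ le j k).

Definition countably_cofinal (I : Type) (le : I -> I -> Prop) : Prop :=
  exists C : set I, countable C /\ forall i, exists j, C j /\ le i j.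

Definition proj_system (I : Type) (le : I -> I -> Prop)
    (X : I -> topologicalType) (p : forall i j, le i j -> X j -> X i) : Prop :=
  (forall i j (h : le i j), continuous (p i j h)) /\
  (forall i (h : le i i), p i i h = id) /\
  (forall i j k (hij : le i j) (hjk : le j k) (hik : le i k),
      p i j hij \o p j k hjk = p i k hik).

Definition proj_cone (I : Type) (le : I -> I -> Prop)
    (X : I -> topologicalType) (p : forall i j, le i j -> X j -> X i)
    (L : topologicalType) (q : forall i, L -> X i) : Prop :=
  (forall i, continuous (q i)) /\
  (forall i j (h : le i j), p i j h \o q j = q i).

Definition is_proj_limit (I : Type) (le : I -> I -> Prop)
    (X : I -> topologicalType) (p : forall i j, le i j -> X j -> X i)
    (L : topologicalType) (q : forall i, L -> X i) : Prop :=
  proj_cone p q /\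
  forall (Y : topologicalType) (r : forall i, Y -> X i), proj_cone p r ->
    exists u : Y -> L, continuous u /\ (forall i, q i \o u = r i) /\
      forall v : Y -> L, continuous v -> (forall i, q i \o v = r i) -> v = u.

(* Main.v *)
From HB Require Import structures.
Require Import Defs.
From mathcomp Require Import all_boot all_order.
From mathcomp Require Import boolp classical_sets functions cardinality topology.
Set Implicit Arguments. Unset Strict Implicit. Unset Printing Implicit Defensive.
Local Open Scope classical_set_scope.

Definition T := (bool + nat)%type.
Definition opn (n : nat) (U : set T) : Prop :=
  (U (inl true) \/ U (inl false) \/ exists k, (n <= k)%N /\ U (inr k)) ->
  forall k, (n <= k)%N -> U (inr k).
Definition Xn (n : nat) : Type := T.
HB.instance Definition _ (n : nat) := Choice.on (Xn n).
Lemma opnT n : opn n setT. Proof. by []. Qed.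
Lemma opnI n : setI_closed (opn n).
Proof.
move=> A B hA hB H j hj; split.
  apply: hA => //; case: H => [[Ha _]|[[Ha _]|[k [hk [Ha _]]]]]; by [left|right;left|right;right;exists k].
apply: hB => //; case: H => [[_ Ha]|[[_ Ha]|[k [hk [_ Ha]]]]]; by [left|right;left|right;right;exists k].
Qed.
Lemma opnU n (I : Type) (f : I -> set T) : (forall i, opn n (f i)) -> opn n (\bigcup_i f i).
Proof.
move=> hf [[i _ Hi]|[[i _ Hi]|[k [hk [i _ Hi]]]]] j hj; exists i => //; apply: (hf i) => //.
by left. by right;left. by right;right;exists k.
Qed.
HB.instance Definition _ (n : nat) := isOpenTopological.Build (Xn n) (@opnT n) (@opnI n) (@opnU n).

Definition opL (U : set T) : Prop :=
  (U (inl true) \/ U (inl false)) -> exists n, forall k, (n <= k)%N -> U (inr k).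
Definition XL : Type := T.
HB.instance Definition _ := Choice.on XL.
Lemma opLT : opL setT. Proof. by move=> _; exists 0%N. Qed.
Lemma opLI : setI_closed opL.
Proof.
move=> A B hA hB H.
have [n hn] : exists n, forall k, (n <= k)%N -> A (inr k).
  by apply: hA; case: H => [[Ha _]|[Ha _]]; [left|right].
have [m hm] : exists n, forall k, (n <= k)%N -> B (inr k).
  by apply: hB; case: H => [[_ Ha]|[_ Ha]]; [left|right].
exists (maxn n m) => k hk; split; [apply: hn|apply: hm]; apply: leq_trans hk;
  by [apply: leq_maxl|apply: leq_maxr].
Qed.
Lemma opLU (I : Type) (f : I -> set T) : (forall i, opL (f i)) -> opL (\bigcup_i f i).
Proof.
move=> hf [[i _ Hi]|[i _ Hi]]; have [n hn] := hf i (ltac:(by [left|right])).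
all: by exists n => k hk; exists i => //; apply: hn.
Qed.
HB.instance Definition _ := isOpenTopological.Build XL opLT opLI opLU.

Lemma openXn n (A : set (Xn n)) : open A <-> opn n A.
Proof. by []. Qed.
Lemma openXL (A : set XL) : open A <-> opL A.
Proof. by []. Qed.

Lemma comp_min (S : topologicalType) (A : set S) :
  (forall y, A y -> forall U, open U -> U y -> A `<=` U) -> compact A.
Proof.
move=> H F PF FA; have [y Ay] := filter_ex FA.
exists y; split => // B N FB NN.
rewrite nbhsE in NN; case: NN => U [oU Uy] UN.
have [z [Bz Az]] := filter_ex (filterI FB FA).
by exists z; split => //; apply: UN; apply: (H y Ay U oU Uy).
Qed.

Lemma compact_fin (S : topologicalType) (f : nat -> S) (A : set S) m :
  compact (A `&` [set x | exists k, (k < m)%N /\ x = f k]).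
Proof.
elim: m => [|m IH].
  apply: comp_min => y [_ [k [hk _]]]; by [].
have -> : A `&` [set x | exists k, (k < m.+1)%N /\ x = f k] =
   (A `&` [set x | exists k, (k < m)%N /\ x = f k]) `|` (A `&` [set f m]).
  apply/seteqP; split => x /=.
    move=> [Ax [k [hk xE]]]; subst x; move: hk; rewrite ltnS leq_eqVlt => /orP [/eqP kE|hk]; first subst k.
      by right; split.
    by left; split => //; exists k.
  move=> [[Ax [k [hk xE]]]|[Ax xE]]; subst x; split => //.
    by exists k; split => //; apply: ltnW.
  by exists m.
apply: compactU => //.
apply: comp_min => y [_ ->] U _ Uy z [_ ->] //.
Qed.

Lemma Xn_all_compact n (A : set (Xn n)) : compact A.
Proof.
have -> : A = (A `&` [set x | exists k, (k < n)%N /\ x = inr k]) `|`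
   ((A `&` [set x | exists k, (n <= k)%N /\ x = inr k]) `|`
   ((A `&` [set inl true]) `|` (A `&` [set inl false]))).
  apply/seteqP; split => x; last by move=> [[]|[[]|[[]|[]]]].
  case: x => [[]|k] Ax.
  - by right; right; left; split.
  - by right; right; right; split.
  case: (ltnP k n) => hk; first by left; split => //; exists k.
  by right; left; split => //; exists k.
apply: compactU; first exact: compact_fin.
apply: compactU.
  apply: comp_min => y [_ [k [hk ->]]] U oU Uk z [_ [j [hj ->]]].
  by apply: (oU) => //; right; right; exists k.
apply: compactU; apply: comp_min => y [_ ->] U _ Uy z [_ ->] //.
Qed.

Lemma Xn_coherent n : coherent (Xn n).
Proof. by move=> A B _ _ _ _; apply: Xn_all_compact. Qed.

Definition le (i j : nat) : Prop := (i <= j)%N.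
Definition pp (i j : nat) (h : le i j) : Xn j -> Xn i := fun x => x.
Definition qL (i : nat) : XL -> Xn i := fun x => x.

Lemma proj_sys : proj_system pp.
Proof.
split; last split => //.
move=> i j h; apply/continuousP => A /openXn oA; apply/openXn => H k hk.
apply: (oA) (leq_trans h hk).
case: H => [Ha|[Hb|[k' [hk' Hk']]]]; [by left|by right;left|].
by right; right; exists k'; split => //; apply: leq_trans h hk'.
Qed.

Lemma qcone : proj_cone pp qL.
Proof.
split => // i; apply/continuousP => A /openXn oA; apply/openXL => H.
exists i => k hk; apply: oA => //; case: H => H; by [left|right;left].
Qed.

Lemma XL_limit : is_proj_limit pp qL.
Proof.
split; first exact: qcone.
move=> Y r [rc rcomm].
have rE : forall m y, r m y = r 0%N y.
  by move=> m y; exact: (congr1 (fun f => f y) (rcomm 0%N m (leq0n m))).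
pose u := fun y : Y => (r 0%N y : XL).
exists u; split; last split.
- apply/continuousP => A /openXL oA; rewrite openE => y /= Ay.
  have key : forall m (V : set (Xn m)), opn m V -> V (u y) -> (forall z, V z -> A z) ->
      nbhs y (u @^-1` A).
    move=> m V oV Vy VA.
    have orV := (proj1 (continuousP (r m)) (rc m) V oV).
    apply: (@filterS _ _ _ (r m @^-1` V)).
      by move=> z /=; rewrite rE => Vz; exact: VA.
    by apply: open_nbhs_nbhs; split => //; rewrite /= rE.
  move: Ay; case E: (u y) => [c|k] Ay.
  + have [n hn] : exists n, forall k, (n <= k)%N -> A (inr k).
      by apply: oA; case: c E Ay => E Ay; [left|right].
    apply: (key n [set z | z = inl c \/ exists k, (n <= k)%N /\ z = inr k]).
    * by move=> _ k hk; right; exists k; split.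
    * by rewrite E; left.
    * by move=> z [->|[k [hk ->]]] //; exact: hn.
  + apply: (key k.+1 [set inr k]).
    * move=> [H|[H|[j [hj H]]]]; try discriminate H.
      by case: H => jk; subst j; rewrite ltnn in hj.
    * by rewrite E.
    * by move=> z ->.
- by move=> i; apply: funext => y /=; rewrite (rE i y).
- move=> v _ vE; apply: funext => y.
  exact: (congr1 (fun f => f y) (vE 0%N)).
Qed.

Definition K (c : bool) : set XL := [set x | x <> inl (~~ c)].

Lemma K_open c : open (K c).
Proof. by apply/openXL => _; exists 0%N => k _. Qed.

Lemma K_sat c : saturated (K c).
Proof. by move=> x y Kx sxy; apply: (sxy (K c) (@K_open c) Kx). Qed.

Lemma K_compact c : compact (K c).
Proof.
move=> F PF FK.
case: (pselect (cluster F (inl c : XL))) => [cl|ncl].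
  exists (inl c); split => //; rewrite /K /=; by case: c {cl FK}.
have [B [N [FB [NN BN]]]] : exists B N, F B /\ nbhs (inl c : XL) N /\
    (forall z, B z -> N z -> False).
  apply: contrapT => H; apply: ncl => B N FB NN.
  apply: contrapT => H2; apply: H; exists B, N; do 2 split => //.
  by move=> z Bz Nz; apply: H2; exists z.
move: NN; rewrite nbhsE => -[U [oU Uc] UN].
have [m hm] : exists m, forall k, (m <= k)%N -> U (inr k).
  by move/openXL: oU; apply; case: c Uc {FK BN UN ncl} => Uc; [left|right].
have Sc := @compact_fin XL (fun k => (inr k : XL)) (K c) m.
have FS : F (K c `&` [set x | exists k, (k < m)%N /\ x = inr k]).
  apply: filterS (filterI FB FK) => z [Bz Kz]; split => //.
  case: z Bz Kz => [b|k] Bz Kz.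
  - have bc : b = c by move: Kz; rewrite /K /=; case: b {Bz}; case: c {FK BN ncl Uc UN Sc hm oU} => //= H; exfalso; apply: H.
    by subst b; exfalso; apply: (BN _ Bz (UN _ Uc)).
  - case: (ltnP k m) => hk; first by exists k.
    by exfalso; apply: (BN _ Bz (UN _ (hm k hk))).
have [x [[Kx _] clx]] := Sc F PF FS.
by exists x.
Qed.

Lemma K_not_compact : ~ compact (K true `&` K false).
Proof.
move=> Hc.
pose G := ((fun n : nat => (inr n : XL)) @ \oo).
have PG : ProperFilter G by exact: fmap_proper_filter.
have GK : G (K true `&` K false) by exists 0%N => // n _; split; discriminate.
have [x [[K1 K2] clx]] := Hc G PG GK.
case: x K1 K2 clx => [[]|k] K1 K2 clx.
- by case: (K2 erefl).
- by case: (K1 erefl).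
have GB : G [set z : XL | exists j, (k < j)%N /\ z = inr j].
  by exists k.+1 => // n hn; exists n; split.
have NN : nbhs (inr k : XL) [set inr k].
  apply: open_nbhs_nbhs; split => //; apply/openXL => -[H|H]; discriminate H.
have [z [[j [hj ->]] zk]] := clx _ _ GB NN.
by case: zk => jk; subst j; rewrite ltnn in hj.
Qed.

Lemma spec_cont (S U : topologicalType) (f : S -> U) x y :
  continuous f -> spec_le x y -> spec_le (f x) (f y).
Proof.
move=> /continuousP fc H V oV Vfx; exact: (H _ (fc V oV) Vfx).
Qed.

Theorem corollary4p6 :
  exists (I : Type) (le : I -> I -> Prop) (X : I -> topologicalType)
         (p : forall i j, le i j -> X j -> X i),
    directed_preorder le /\ countably_cofinal le /\ proj_system p /\
        (forall i, coherent (X i)) /\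
        (exists (L : topologicalType) (q : forall i, L -> X i), is_proj_limit p q) /\
        (forall (L : topologicalType) (q : forall i, L -> X i),
            is_proj_limit p q -> ~ coherent L).
Proof.
exists nat, le, Xn, pp.
split.
  split; first by move=> i; exact: leqnn.
  split; first by move=> i j k; exact: leq_trans.
  split; first by exists 0%N.
  by move=> i j; exists (maxn i j); split; [exact: leq_maxl|exact: leq_maxr].
split.
  by exists setT; split; [exact: countableP|move=> i; exists i; split => //; exact: leqnn].
split; first exact: proj_sys.
split; first exact: Xn_coherent.
split; first by exists XL, qL; exact: XL_limit.
move=> L q [[qc qcomm] Lu] Lcoh.
have [_ XLu] := XL_limit.
have [u [uc [uE _]]] := Lu XL qL qcone.
have [v [vc [vE _]]] := XLu L q (conj qc qcomm).
have vu : forall x, v (u x) = x.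
  move=> x; have h1 := congr1 (fun f => f x) (uE 0%N).
  have h2 := congr1 (fun f => f (u x)) (vE 0%N).
  exact: (etrans h2 h1).
have uv : forall y, u (v y) = y.
  have [w [_ [_ wU]]] := Lu L q (conj qc qcomm).
  have e1 : u \o v = w.
    apply: wU; first by move=> y; apply: continuous_comp; [exact: vc|exact: uc].
    move=> i; apply: funext => y /=.
    have h1 := congr1 (fun f => f (v y)) (uE i).
    have h2 := congr1 (fun f => f y) (vE i).
    exact: (etrans h1 h2).
  have e2 : id = w.
    by apply: wU => // y; exact: cvg_id.
  by move=> y; have := congr1 (fun f => f y) (etrans e1 (esym e2)).
have sat c : saturated (u @` K c).
  move=> x y [z Kz <-] sxy.
  have := spec_cont vc sxy; rewrite vu => szy.
  by exists (v y); [exact: (K_sat Kz szy)|exact: uv].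
have cpt c : compact (u @` K c).
  by apply: continuous_compact; [exact: continuous_subspaceT|exact: (@K_compact c)].
have H := Lcoh _ _ (cpt true) (sat true) (cpt false) (sat false).
have H2 : compact (v @` (u @` K true `&` u @` K false)).
  by apply: continuous_compact; [exact: continuous_subspaceT|exact: H].
apply: K_not_compact.
suff <- : v @` (u @` K true `&` u @` K false) = K true `&` K false by [].
apply/seteqP; split.
  move=> _ [_ [[a Ka <-] [b Kb eab]] <-].
  have ab : a = b by rewrite -(vu a) -eab vu.
  by subst b; rewrite vu.
move=> z [K1 K2]; exists (u z); last exact: vu.
by split; exists z.
Qed.
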